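(* Let $r\ge1$ and let $\mathbf{Y}^r$ be the $r$-fold Cartesian product of Young's lattice, with $p_n$ its number of rank-$n$ elements ($p_k=0$ for $k<0$, $\Delta p_n=p_n-p_{n-1}$). Then for every $n\ge1$ and $1\le j\le n$, $\Delta p_n\ge\Delta p_{n-j-\delta_{r,1}}$ (that is, $\Delta p_n\ge\Delta p_{n-j-1}$ if $r=1$ and $\Delta p_n\ge\Delta p_{n-j}$ if $r\ge2$).
   Context: Young's lattice $\mathbf{Y}$ is the set of all integer partitions ordered by inclusion of Ferrers (Young) diagrams, graded by the size of the partition; it is a $1$-differential poset. $\mathbf{Y}^r$ carries the componentwise order and the rank is the total size; it is $r$-differential. $\delta_{r,1}$ is the Kronecker delta. *)

(* Defs.v *)
From mathcomp Require Import all_boot all_order all_algebra.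
Set Implicit Arguments. Unset Strict Implicit. Unset Printing Implicit Defensive.

(* A Young diagram (integer partition) of size m <= n has at most n parts,
   each at most n.  We encode it as its weakly decreasing list of parts,
   padded with zeros to length exactly n: an n-tuple of 'I_n.+1.
   This is a bijection between partitions of size <= n and nonincreasing
   n-tuples over 'I_n.+1, so the set below is exactly the set of elements
   of rank n of Y^r (r-tuples of partitions whose sizes sum to n). *)
Definition padded_partition (n : nat) (t : n.-tuple 'I_n.+1) : bool :=
  sorted geq (map val t).

Definition psize (n : nat) (t : n.-tuple 'I_n.+1) : nat := sumn (map val t).

Definition Yr_rank (r n : nat) : {set {ffun 'I_r -> n.-tuple 'I_n.+1}} :=
  [set f : {ffun 'I_r -> n.-tuple 'I_n.+1} | [forall i, padded_partition (f i)] && (\sum_(i < r) psize (f i) == n)].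

Definition pY (r n : nat) : nat := #|Yr_rank r n|.

Definition pZ (r : nat) (k : int) : int :=
  match k with Posz m => (pY r m)%:Z | Negz _ => 0%R end.

Definition dpZ (r : nat) (k : int) : int := (pZ r k - pZ r (k - 1))%R.

(* Main.v *)
Require Import Defs.
From mathcomp Require Import all_boot all_order all_algebra zify.
Import Order.TTheory GRing.Theory Num.Theory.
Set Implicit Arguments. Unset Strict Implicit. Unset Printing Implicit Defensive.

Definition valid (s : seq nat) : bool := sorted geq s && all (fun x => 0 < x) s.

Lemma geq_transitive : transitive geq.
Proof. move=> y x z /= h1 h2; exact: leq_trans h2 h1. Qed.

Lemma nth_le_sumn s i : nth 0 s i <= sumn s.
Proof.
elim: s i => [|x s IH] [|i] //=; first by rewrite leq_addr.
exact: leq_trans (IH i) (leq_addl _ _).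
Qed.

Lemma size_le_sumn s : all (fun x => 0 < x) s -> size s <= sumn s.
Proof. elim: s => //= x s IH /andP[hx hs]; have := IH hs; lia. Qed.

Lemma sumn_filter_pos s : sumn (filter (fun x => 0 < x) s) = sumn s.
Proof. elim: s => //= x s IH; case: x => //= x; by rewrite IH. Qed.

Lemma path_geq_all x s : path geq x s -> all (fun y => y <= x) s.
Proof. move=> h; have := order_path_min geq_transitive h. by []. Qed.

Lemma nth_filter_sorted s i : sorted geq s ->
  nth 0 (filter (fun x => 0 < x) s) i = nth 0 s i.
Proof.
elim: s i => [|x s IH] i //=.
move=> hp; have hs := path_sorted hp.
case: x hp => [|x] hp /=.
  have /all_pred1P E : all (pred1 0) s.
    apply/allP => y /(allP (@path_geq_all _ _ hp)); rewrite leqn0 => /eqP ->; by [].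
  have -> : filter (fun x => 0 < x) s = [::].
    by rewrite E filter_nseq.
  case: i => [|i] //=; rewrite E nth_nseq; by case: ifP.
by case: i => [|i] //=; rewrite IH.
Qed.

Lemma path_geq_nseq y k : path geq y (nseq k 0).
Proof. elim: k y => //= k IH y; rewrite IH andbT; by []. Qed.

Lemma sorted_cat_nseq s k : sorted geq s -> sorted geq (s ++ nseq k 0).
Proof.
case: s => [|x s] /=; first by case: k => // k /= _; exact: path_geq_nseq.
by rewrite cat_path path_geq_nseq andbT.
Qed.

Lemma path_rcons1 x s : 0 < x -> path geq x s -> all (fun y => 0 < y) s ->
  path geq x (rcons s 1).
Proof.
elim: s x => [|y s IH] x /= hx; first by rewrite andbT.
by move=> /andP[hxy hp] /andP[hy hs]; rewrite hxy IH.
Qed.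

Lemma valid_rcons1 s : valid s -> valid (rcons s 1).
Proof.
case/andP=> hs ha; rewrite /valid all_rcons ha andbT.
case: s hs ha => [|x s] //= hp /andP[hx hs]; rewrite andbT; exact: path_rcons1.
Qed.

Lemma valid_rcons_inv s x : valid (rcons s x) -> valid s.
Proof.
case/andP=> hs; rewrite all_rcons => /andP[_ ha]; rewrite /valid ha andbT.
apply: (subseq_sorted geq_transitive _ hs); exact: subseq_rcons.
Qed.

Definition enc n (t : n.-tuple 'I_n.+1) : seq nat := filter (fun x => 0 < x) (map val t).
Definition dec m (s : seq nat) : m.-tuple 'I_m.+1 := [tuple inord (nth 0 s i) | i < m].

Lemma enc_valid n (t : n.-tuple 'I_n.+1) : padded_partition t -> valid (enc t).
Proof.
move=> h; rewrite /valid /enc filter_all andbT; exact: (sorted_filter geq_transitive _ h).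
Qed.

Lemma enc_sum n (t : n.-tuple 'I_n.+1) : sumn (enc t) = psize t.
Proof. by rewrite /enc sumn_filter_pos. Qed.

Lemma dec_enc n (t : n.-tuple 'I_n.+1) : padded_partition t -> dec n (enc t) = t.
Proof.
move=> h; apply: eq_from_tnth => i; rewrite tnth_mktuple /enc nth_filter_sorted //.
rewrite (nth_map ord0) ?size_tuple // -tnth_nth; exact: inord_val.
Qed.

Lemma map_dec m s : valid s -> sumn s <= m ->
  map val (dec m s) = s ++ nseq (m - size s) 0.
Proof.
case/andP=> hs ha hm; have hsz := leq_trans (size_le_sumn ha) hm.
apply: (@eq_from_nth _ 0); first by rewrite size_map size_tuple size_cat size_nseq; lia.
move=> i; rewrite size_map size_tuple => hi.
rewrite (nth_map ord0) ?size_tuple //.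
have -> : nth ord0 (dec m s) i = tnth (dec m s) (Ordinal hi) by rewrite (tnth_nth ord0).
rewrite tnth_mktuple /= inordK; last first.
  by rewrite ltnS; exact: leq_trans (nth_le_sumn s i) hm.
rewrite nth_cat; case: ifP => // hi2; rewrite nth_nseq nth_default //; last by rewrite leqNgt hi2.
by case: ifP.
Qed.

Lemma dec_padded m s : valid s -> sumn s <= m -> padded_partition (dec m s).
Proof.
move=> hv hm; rewrite /padded_partition map_dec //; apply: sorted_cat_nseq.
by case/andP: hv.
Qed.

Lemma dec_psize m s : valid s -> sumn s <= m -> psize (dec m s) = sumn s.
Proof. by move=> hv hm; rewrite /psize map_dec // sumn_cat sumn_nseq mul0n addn0. Qed.

Lemma enc_dec m s : valid s -> sumn s <= m -> enc (dec m s) = s.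
Proof.
move=> hv hm; rewrite /enc map_dec // filter_cat filter_nseq /= cats0.
by apply/all_filterP; case/andP: hv.
Qed.

Section Fam.
Variable r : nat.
Local Notation Fam := {ffun 'I_r -> seq nat}.

Definition V k (F : Fam) : bool :=
  [forall i, valid (F i)] && (\sum_(i < r) sumn (F i) == k).

Definition ENC n (f : {ffun 'I_r -> n.-tuple 'I_n.+1}) : Fam := [ffun i => enc (f i)].
Definition DEC m (F : Fam) : {ffun 'I_r -> m.-tuple 'I_m.+1} := [ffun i => dec m (F i)].

Lemma sumn_le_V k F i : V k F -> sumn (F i) <= k.
Proof.
case/andP=> _ /eqP <-; rewrite (bigD1 i) //=; exact: leq_addr.
Qed.

Lemma Y_V n f : f \in Yr_rank r n -> V n (ENC f).
Proof.
rewrite inE => /andP[/forallP hp /eqP hs]; apply/andP; split.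
  by apply/forallP => i; rewrite ffunE; apply: enc_valid.
by apply/eqP; rewrite -{2}hs; apply: eq_bigr => i _; rewrite ffunE enc_sum.
Qed.

Lemma DEC_ENC n f : f \in Yr_rank r n -> DEC n (ENC f) = f.
Proof.
rewrite inE => /andP[/forallP hp _]; apply/ffunP => i; rewrite !ffunE dec_enc //.
Qed.

Lemma V_Y m F : V m F -> DEC m F \in Yr_rank r m.
Proof.
move=> hV; have hle i := sumn_le_V i hV; case/andP: (hV) => /forallP hv /eqP hs.
rewrite inE; apply/andP; split.
  by apply/forallP => i; rewrite ffunE; apply: dec_padded.
apply/eqP; rewrite -[X in _ = X]hs; apply: eq_bigr => i _; by rewrite ffunE dec_psize.
Qed.

Lemma ENC_DEC m F : V m F -> ENC (DEC m F) = F.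
Proof.
move=> hV; have hle i := sumn_le_V i hV; case/andP: (hV) => /forallP hv _.
by apply/ffunP => i; rewrite !ffunE enc_dec.
Qed.

Definition S k (P : pred Fam) := [set f in Yr_rank r k | P (ENC f)].

Lemma transfer k k' (P Q : pred Fam) (g : Fam -> Fam) :
  (forall F, V k F -> P F -> V k' (g F) && Q (g F)) ->
  {in [pred F | V k F && P F] &, injective g} ->
  #|S k P| <= #|S k' Q|.
Proof.
move=> hg hinj.
pose h := fun f : {ffun 'I_r -> k.-tuple 'I_k.+1} => DEC k' (g (ENC f)).
rewrite -(@card_in_imset _ _ h); last first.
  move=> f1 f2 /setIdP[h1 p1] /setIdP[h2 p2] /(congr1 (@ENC k')).
  have /andP[v1 _] := hg _ (Y_V h1) p1; have /andP[v2 _] := hg _ (Y_V h2) p2.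
  rewrite /h !ENC_DEC // => /hinj.
  rewrite !inE (Y_V h1) (Y_V h2) p1 p2 => /(_ isT isT) /(congr1 (@DEC k)).
  by rewrite !DEC_ENC.
apply: subset_leq_card; apply/subsetP => _ /imsetP[f hf ->].
move/setIdP: hf => [hY hP].
have /andP[v q] := hg _ (Y_V hY) hP.
by apply/setIdP; rewrite /h V_Y // ENC_DEC.
Qed.

Lemma card_split k (P : pred Fam) :
  #|S k P| + #|S k (predC P)| = #|Yr_rank r k|.
Proof.
have E1 : S k P = Yr_rank r k :&: [set f | P (ENC f)].
  by apply/setP => f; rewrite /S !in_set.
have E2 : S k (predC P) = Yr_rank r k :\: [set f | P (ENC f)].
  by apply/setP => f; rewrite /S !in_set andbC.
by rewrite E1 E2 cardsID.
Qed.

Lemma card_all k : #|S k predT| = #|Yr_rank r k|.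
Proof. by apply: eq_card => f; rewrite /S in_set andbT. Qed.

Definition upd (F : Fam) i s : Fam := [ffun j => if j == i then s else F j].

Lemma sum_upd F i s :
  \sum_(j < r) sumn (upd F i s j) + sumn (F i) = \sum_(j < r) sumn (F j) + sumn s.
Proof.
rewrite (bigD1 i) //= [in RHS](bigD1 i) //= ffunE eqxx.
rewrite (eq_bigr (fun j => sumn (F j))); last by move=> j /negbTE hj; rewrite ffunE hj.
rewrite addnAC [RHS]addnC addnA; congr (_ + _).
Qed.

Lemma V_upd k k' F i s : V k F -> valid s -> k + sumn s = k' + sumn (F i) ->
  V k' (upd F i s).
Proof.
case/andP=> /forallP hv /eqP hs hvs he; apply/andP; split.
  by apply/forallP => j; rewrite ffunE; case: ifP.
apply/eqP; have := sum_upd F i s; rewrite hs he; lia.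
Qed.

Lemma upd_inj F G i a b : upd F i a = upd G i b ->
  a = b /\ (forall j, j != i -> F j = G j).
Proof.
move=> E; split; first by have := congr1 (fun H : Fam => H i) E; rewrite !ffunE eqxx.
move=> j /negbTE hj; have := congr1 (fun H : Fam => H j) E; by rewrite !ffunE hj.
Qed.

Lemma upd_same F i : upd F i (F i) = F.
Proof. by apply/ffunP => j; rewrite ffunE; case: eqP => // ->. Qed.

Lemma V0 F i : V 0 F -> F i = [::].
Proof.
move=> hV; have := sumn_le_V i hV; rewrite leqn0; case/andP: hV => /forallP /(_ i).
case: (F i) => //= x s /andP[_ /andP[hx _]]; lia.
Qed.

End Fam.

Section Main.
Variable r : nat.
Variable i0 : 'I_r.
Local Notation Fam := {ffun 'I_r -> seq nat}.

Definition Pone : pred Fam := fun F => last 0 (F i0) == 1.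

Lemma upd_injective (F G : Fam) i a b : upd F i a = upd G i b -> (a = b -> F i = G i) -> F = G.
Proof.
move=> /upd_inj [hab hj] h; apply/ffunP => j.
by case: (eqVneq j i) => [->|/hj]; [exact: h|].
Qed.

Lemma last1_rcons s : last 0 s == 1 -> s = rcons (take (size s).-1 s) 1.
Proof.
case: s /lastP => [|s x]. by [].
rewrite last_rcons. move=> /eqP. move=> ->.
rewrite size_rcons /=. rewrite -cats1. rewrite take_size_cat //. by rewrite cats1.
Qed.

Lemma add_i0 k : #|S k (@predT Fam)| <= #|S k.+1 Pone|.
Proof.
apply: (@transfer _ _ _ _ _ (fun F => upd F i0 (rcons (F i0) 1))).
  move=> F hV _; have hv : forall i, valid (F i) by case/andP: hV => /forallP.
  apply/andP; split.
    apply: V_upd hV (valid_rcons1 (hv i0)) _.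
    rewrite sumn_rcons; lia.
  by rewrite /Pone ffunE eqxx last_rcons.
move=> F G _ _ E; apply: (upd_injective E); exact: rcons_injl.
Qed.

Lemma rem_i0 k : #|S k.+1 Pone| <= #|S k (@predT Fam)|.
Proof.
apply: (@transfer _ _ _ _ _ (fun F => upd F i0 (take (size (F i0)).-1 (F i0)))).
  move=> F hV hP; rewrite andbT; have E := last1_rcons hP.
  have hv : forall i, valid (F i) by case/andP: hV => /forallP.
  have hv' : valid (take (size (F i0)).-1 (F i0)).
    by apply: (@valid_rcons_inv _ 1); rewrite -E.
  apply: V_upd hV hv' _.
  rewrite [in RHS]E sumn_rcons; lia.
move=> F G; rewrite !inE => /andP[_ hF] /andP[_ hG] E.
apply: (upd_injective E) => e; by rewrite (last1_rcons hF) (last1_rcons hG) e.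
Qed.

Lemma card_N k : #|Yr_rank r k.+1| = #|S k.+1 (predC Pone)| + #|Yr_rank r k|.
Proof.
rewrite -(card_split k.+1 Pone) addnC; congr (_ + _).
rewrite -card_all; apply/eqP; rewrite eqn_leq add_i0 rem_i0 //.
Qed.

Lemma card_N0 : #|Yr_rank r 0| = #|S 0 (predC Pone)|.
Proof.
rewrite -(card_split 0 Pone); suff -> : #|S 0 Pone| = 0 by [].
apply: eq_card0 => f; rewrite /S in_set; apply/negbTE; apply/andP => [[hY hP]].
by move: hP; rewrite /Pone (V0 i0 (Y_V hY)).
Qed.

Lemma dp_nat k : dpZ r (Posz k) = Posz (#|S k (predC Pone)|).
Proof.
case: k => [|k].
  by rewrite /dpZ /= /pY card_N0 subr0.
rewrite /dpZ [X in (_ - pZ r X)%R](_ : _ = Posz k); last by lia.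
by rewrite /= /pY card_N PoszD addrK.
Qed.

Lemma dp_neg x : (x < 0)%R -> dpZ r x = 0%R.
Proof.
move=> hx; rewrite /dpZ.
have h : forall y : int, (y < 0)%R -> pZ r y = 0%R by case.
rewrite !h //; lia.
Qed.

Lemma add_i1 i1 k : i1 != i0 -> #|S k (predC Pone)| <= #|S k.+1 (predC Pone)|.
Proof.
move=> hi.
apply: (@transfer _ _ _ _ _ (fun F => upd F i1 (rcons (F i1) 1))).
  move=> F hV hP; have hv : forall i, valid (F i) by case/andP: hV => /forallP.
  apply/andP; split.
    apply: V_upd hV (valid_rcons1 (hv i1)) _.
    rewrite sumn_rcons; lia.
  have hi2 : (i0 == i1) = false by apply/negbTE; rewrite eq_sym.
  by move: hP; rewrite /= /Pone ffunE hi2.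
move=> F G _ _ E; apply: (upd_injective E); exact: rcons_injl.
Qed.

End Main.

Definition bump (s : seq nat) := if s is x :: s' then x.+1 :: s' else s.

Lemma V1_nonempty k (F : {ffun 'I_1 -> seq nat}) : V k.+1 F -> F ord0 <> [::].
Proof. by case/andP=> _; rewrite big_ord1 => /eqP h E; rewrite E in h. Qed.

Lemma bump_step k : #|S k.+1 (predC (Pone (@ord0 0)))| <= #|S k.+2 (predC (Pone (@ord0 0)))|.
Proof.
have dec1 : forall F : {ffun 'I_1 -> seq nat}, V k.+1 F ->
    exists x s, F ord0 = x :: s.
  move=> F hV; have := V1_nonempty hV; case: (F ord0) => [//|x s] _; by exists x, s.
apply: (@transfer _ _ _ _ _ (fun F => upd F ord0 (bump (F ord0)))).
  move=> F hV hP; have [x [s E]] := dec1 F hV.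
  have hv : valid (F ord0) by case/andP: hV => /forallP.
  move: hv hP; rewrite /= /Pone E => /andP[/= hp /andP[hx ha]] hl.
  have hvb : valid (x.+1 :: s).
    rewrite /valid /= ha andbT; case: s {E hl ha} hp => //= y s /andP[h1 ->].
    by rewrite andbT; apply: leq_trans h1 _.
  apply/andP; split.
    apply: V_upd hV hvb _; rewrite E /=; lia.
  rewrite ffunE /=; case: s {E hvb ha hp} hl => //= _; lia.
move=> F G; rewrite !inE => /andP[hF _] /andP[hG _] E.
have [x [s E1]] := dec1 F hF; have [y [t E2]] := dec1 G hG.
apply: (upd_injective E); rewrite E1 E2 /= => [[-> ->]]; by [].
Qed.

Lemma spike n : 1 < n -> #|S 0 (predC (Pone (@ord0 0)))| <= #|S n (predC (Pone (@ord0 0)))|.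
Proof.
move=> hn.
apply: (@transfer _ _ _ _ _ (fun F => upd F ord0 [:: n])).
  move=> F hV _; have h0 := V0 ord0 hV; apply/andP; split.
    apply: V_upd hV _ _; first by rewrite /valid /= andbT; lia.
    rewrite h0 /=; lia.
  rewrite /= /Pone ffunE /=; lia.
move=> F G; rewrite !inE => /andP[hF _] /andP[hG _] _.
by apply/ffunP => j; rewrite (V0 j hF) (V0 j hG).
Qed.

Lemma chain (f : nat -> nat) : (forall k, f k <= f k.+1) -> forall a b, a <= b -> f a <= f b.
Proof.
move=> h a b /subnK <-; elim: (b - a) => // d IH; rewrite addSn; exact: leq_trans IH (h _).
Qed.

Theorem proposition6p4 (r n j : nat) :
  (1 <= r)%N -> (1 <= n)%N -> (1 <= j <= n)%N ->
  (dpZ r (n%:Z - j%:Z - (r == 1%N)%:Z) <= dpZ r n%:Z)%R.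
Proof.
move=> hr hn /andP[hj1 hjn].
case: r hr => [//|[|r']] _.
- rewrite (dp_nat (@ord0 0) n).
  case: (ltnP j n) => h.
    rewrite (_ : (_ - _ - _)%R = Posz (n - j.+1)); last by rewrite /=; lia.
    rewrite (dp_nat (@ord0 0)) lez_nat.
    case E: (n - j.+1) => [|a].
      apply: spike; lia.
    have hb : a <= n.-1 by lia.
    have := chain (f := fun k => #|S k.+1 (predC (Pone (@ord0 0)))|) (@bump_step) hb.
    by rewrite /= prednK //; lia.
  rewrite dp_neg //; rewrite /=; lia.
- have hi : (@ord_max r'.+1) != ord0 by [].
  rewrite (_ : (_ - _ - _)%R = Posz (n - j)); last by rewrite /=; lia.
  rewrite !(dp_nat (@ord0 r'.+1)) lez_nat.
  apply: (chain (f := fun k => #|S k (predC (Pone (@ord0 r'.+1)))|)); last by lia.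
  move=> k; exact: add_i1 hi.
Qed.
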